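(* Let $K$ be a field of characteristic $0$ and let $m=x_1^{\alpha_1}\cdots x_n^{\alpha_n}$ with $\alpha_i\ge1$ for all $i$. Then the Lie algebra $\mathfrak{g}_m$ is the space of diagonal matrices $\mathrm{diag}(\lambda_1,\ldots,\lambda_n)$ such that $\sum_{i=1}^n\alpha_i\lambda_i=0$.
   Context: For $P\in K[x_1,\ldots,x_n]$, the Lie algebra $\mathfrak{g}_P$ of $P$ is the Lie algebra (tangent space at the identity) of the group of invariants $\{A\in GL_n(K): P(A.x)=P(x)\}$; equivalently, $\mathfrak{g}_P$ is the linear subspace of matrices $A=(a_{ij})\in M_n(K)$ such that $\sum_{i,j\in[n]} a_{ij}\,x_j\,\frac{\partial P}{\partial x_i}=0$. *)

(* Defs.v *)
From HB Require Import structures.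
From mathcomp Require Import all_boot all_order all_algebra.
From mathcomp Require Import mpoly.
Set Implicit Arguments. Unset Strict Implicit. Unset Printing Implicit Defensive.
Import Order.TTheory GRing.Theory.
Local Open Scope ring_scope.

(* Lie algebra of a polynomial P in K[x_1..x_n]: matrices A = (a_ij) with
   sum_{i,j} a_ij x_j dP/dx_i = 0. Indices are 'I_n (0-based). *)
Definition lie_algebra (K : fieldType) (n : nat) (P : {mpoly K[n]})
  : pred 'M[K]_n :=
  fun A => (\sum_(i < n) \sum_(j < n) A i j *: ('X_j * mderiv i P)) == 0.

Definition monomial (K : fieldType) (n : nat) (alpha : 'I_n -> nat)
  : {mpoly K[n]} := \prod_(i < n) 'X_i ^+ alpha i.

(* Main.v *)
Require Import Defs.
From HB Require Import structures.
From mathcomp Require Import all_boot all_order all_algebra.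
From mathcomp Require Import mpoly.
From mathcomp Require Import zify.
Import Order.TTheory GRing.Theory.
Local Open Scope ring_scope.

Section Aux.
Variables (K : fieldType) (n : nat) (alpha : 'I_n -> nat).
Hypothesis ha : forall i, (1 <= alpha i)%N.

Let a : 'X_{1..n} := [multinom alpha i | i < n].

Lemma monE : monomial K alpha = 'X_[a].
Proof. by rewrite mpolyXE_id /monomial; apply: eq_bigr => i _; rewrite mnmE. Qed.

Lemma monEq (i j i' j' : 'I_n) :
  ((U_(j) + (a - U_(i)))%MM == (U_(j') + (a - U_(i')))%MM) =
  ((i == j) && (i' == j')) || ((i == i') && (j == j')).
Proof.
have cmp : forall l (i j : 'I_n), (U_(j) + (a - U_(i)))%MM l = ((j == l) + (alpha l - (i == l)))%N.
  by move=> l i0 j0; rewrite mnmDE mnmBE !mnm1E mnmE.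
apply/eqP/idP.
- move/mnmP => H.
  have H' : forall l, ((j == l) + (i' == l) = (j' == l) + (i == l))%N.
    move=> l; have := H l; rewrite !cmp; have := ha l.
    by case: (j == l); case: (i' == l); case: (j' == l); case: (i == l) => /=; lia.
  case: (eqVneq i j) => [eij|nij].
    subst j;  case: (eqVneq i' j') => //= nij'.
    have := H' i'; rewrite eqxx [j' == i']eq_sym (negbTE nij').
    by case: (i == i') => /=; lia.
  have := H' i; rewrite eqxx eq_sym (negbTE nij) /=.
  case: (eqVneq i' i) => [ei|ni] /=; last by lia.
  subst i' => _ /=.
  have := H' j; rewrite eqxx (negbTE nij) /=.
  move=> h; apply/eqP; move: h; case: (eqVneq j' j) => [e|ne] /=; [by rewrite e | lia].
- case/orP => /andP [/eqP e1 /eqP e2]; subst => //.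
  apply/mnmP => l; rewrite !cmp; have := ha l.
  by case: (j == l); case: (j' == l) => /=; lia.
Qed.

Lemma aE (i : 'I_n) : a = (U_(i) + (a - U_(i)))%MM.
Proof.
apply/mnmP => l; rewrite mnmDE mnmBE mnm1E mnmE; have := ha l.
by case: (i == l) => /=; lia.
Qed.

Lemma monA (i j : 'I_n) : ((U_(j) + (a - U_(i)))%MM == a) = (i == j).
Proof. by rewrite {2}(aE i) monEq eqxx andbT /= eq_sym orbb. Qed.

Lemma coefS (A : 'M[K]_n) k :
  (\sum_(i < n) \sum_(j < n) A i j *: ('X_j * mderiv i (monomial K alpha)))@_k
  = \sum_(i < n) \sum_(j < n) A i j * (alpha i)%:R * ((U_(j) + (a - U_(i)))%MM == k)%:R.
Proof.
rewrite raddf_sum; apply: eq_bigr => i _; rewrite raddf_sum; apply: eq_bigr => j _.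
rewrite monE mderivX mnmE -scalerAr -mpolyXD scalerA.
by rewrite /= mcoeffZ mcoeffX.
Qed.
End Aux.

Theorem proposition4 (K : fieldType) (n : nat) (alpha : 'I_n -> nat) :
  [pchar K] =i pred0 ->
  (forall i, (1 <= alpha i)%N) ->
  forall A : 'M[K]_n,
    A \in lie_algebra (monomial K alpha) <->
    exists lambda : 'rV[K]_n,
      A = diag_mx lambda /\ \sum_(i < n) (alpha i)%:R * lambda 0 i = 0.
Proof.
move=> hc ha A; rewrite unfold_in /lie_algebra.
move/pcharf0P: hc => hc.
have hal i : (alpha i)%:R != 0 :> K by rewrite hc -lt0n ha.
split.
- move/eqP => H0.
  have off i j : i != j -> A i j = 0.
    move=> nij; have := congr1 (mcoeff (U_(j) + ([multinom alpha i | i < n] - U_(i)))%MM) H0.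
    rewrite coefS // mcoeff0 (bigD1 i) //= (bigD1 j) //= monEq //.
    rewrite !eqxx (negbTE nij) /=.
    rewrite big1; last first.
      move=> j' nj'; rewrite monEq // eqxx (negbTE nj') (negbTE nij) ?andbF /=.
      by rewrite mulr0.
    rewrite big1; last first.
      move=> i' ni'; apply: big1 => j' _; rewrite monEq // (negbTE nij) (negbTE ni') /=.
      by rewrite ?andbF /= mulr0.
    rewrite !addr0 mulr1 => /eqP; rewrite mulf_eq0 (negbTE (hal i)) orbF.
    by move/eqP.
  exists (\row_i A i i); split.
    apply/matrixP => i j; rewrite !mxE; case: (eqVneq i j) => [<-|nij].
      by rewrite mulr1n.
    by rewrite mulr0n off.
  have := congr1 (mcoeff [multinom alpha i | i < n]) H0.
  rewrite coefS // mcoeff0 => H1; rewrite -[RHS]H1.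
  apply: eq_bigr => i _.
  rewrite (bigD1 i) //= monA // eqxx big1 ?addr0; last first.
    by move=> j nj; rewrite monA // eq_sym (negbTE nj) mulr0.
  by rewrite mxE mulr1 mulrC.
- case=> lam [-> hs]; apply/eqP/mpolyP => k.
  rewrite coefS // mcoeff0.
  have -> : \sum_(i < n) \sum_(j < n) (diag_mx lam) i j * (alpha i)%:R *
       ((U_(j) + ([multinom alpha i | i < n] - U_(i)))%MM == k)%:R
     = \sum_(i < n) ((alpha i)%:R * lam 0 i) * (([multinom alpha i | i < n] == k))%:R.
    apply: eq_bigr => i _; rewrite (bigD1 i) //= -(@aE _ _ ha i) big1 ?addr0.
      by rewrite mxE eqxx mulr1n [_ * lam 0 i]mulrC.
    by move=> j nj; rewrite mxE eq_sym (negbTE nj) mulr0n !mul0r.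
  by rewrite -mulr_suml hs mul0r.
Qed.
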